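(* For $i\neq j$ let $a_{ij}=\frac{(n-1)(2-\omega_i-\omega_j)\eta}{n}$. For any constant $\varepsilon\in(0,\eta)$ let $c_\varepsilon=\min\{\max_{i\ne j}a_{ij}-2\varepsilon,1\}$. Then the set $E_{c_\varepsilon}=\{(x_1,\dots,x_n)\in[0,1]^n:\max_{i,j}|x_i-x_j|\ge c_\varepsilon\}$ is finite-time robustly reachable from $[0,1]^n$ under control protocol (C6).
   Context: Fix $n\ge3$, $\mathcal V=\{1,\dots,n\}$, confidence thresholds $r_i\in(0,1]$, belief factors $\omega_i\in(0,1)$, $\eta>0$. States $x(t)\in[0,1]^n$. Neighbor set $\mathcal N_i(t)=\{j:|x_j(t)-x_i(t)|\le r_i\}$ (contains $i$), $\Pi_{[0,1]}(y)=\min\{1,\max\{0,y\}\}$, $x_{\rm ave}(t)=\frac1n\sum_ix_i(t)$. Control protocol (C6): $x_i(t+1)=\Pi_{[0,1]}\big(\omega_ix_{\rm ave}(t)+\frac{1-\omega_i}{|\mathcal N_i(t)|}[x_i(t)+\sum_{j\in\mathcal N_i(t)\setminus\{i\}}(x_j(t)+u_{ji}(t)+b_{ji}(t))]\big)$, where for $j\in\mathcal N_i(t)\setminus\{i\}$: $\delta_i(t)\in(0,\eta)$ is a chosen parameter, $u_{ji}(t)\in[-\eta+\delta_i(t),\eta-\delta_i(t)]$ a chosen control input, $b_{ji}(t)\in[-\delta_i(t),\delta_i(t)]$ an arbitrary uncertainty; the choices may depend on $x(0),\dots,x(t)$. A set $S\subseteq[0,1]^n$ is finite-time robustly reachable from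 $[0,1]^n$ under the protocol if there exist constants $T>0$ and $\varepsilon'\in(0,\eta)$ such that for every $x(0)\in[0,1]^n$, either $x(0)\in S$, or one can choose $\delta_i(t)\in[\varepsilon',\eta)$ and $u_{ji}(t)\in[-\eta+\delta_i(t),\eta-\delta_i(t)]$ ($0\le t<T$, $i\in\mathcal V$, $j\in\mathcal N_i(t)\setminus\{i\}$) guaranteeing that for arbitrary $b_{ji}(t)\in[-\delta_i(t),\delta_i(t)]$ there is $t\in[1,T]$ with $x(t)\in S$. *)

(* Defs.v *)
From Stdlib Require Import Reals Lra List.
Import ListNotations.
From Stdlib Require Import Bool.
Open Scope R_scope.

(* Agents are indexed by 0..n-1; a state is a function nat -> R
   (only the values at indices < n matter). *)
Definition state := nat -> R.

Definition idx (n : nat) : list nat := seq 0 n.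

Definition rsum (l : list nat) (f : nat -> R) : R :=
  fold_right (fun j acc => f j + acc) 0 l.

Definition proj01 (y : R) : R := Rmin 1 (Rmax 0 y).

Definition in_box (n : nat) (x : state) : Prop :=
  forall i, (i < n)%nat -> 0 <= x i <= 1.

Definition x_ave (n : nat) (x : state) : R := rsum (idx n) x / INR n.

Definition nbb (r : nat -> R) (x : state) (i j : nat) : bool :=
  if Rle_dec (Rabs (x j - x i)) (r i) then true else false.

Definition nbrs_other (n : nat) (r : nat -> R) (x : state) (i : nat) : list nat :=
  filter (fun j => andb (negb (Nat.eqb j i)) (nbb r x i j)) (idx n).

(* |N_i(x)| (N_i contains i) *)
Definition card_N (n : nat) (r : nat -> R) (x : state) (i : nat) : R :=
  INR (S (length (nbrs_other n r x i))).

(* One step of protocol (C6). d i = delta_i(t), uu j i = u_ji(t), bb j i = b_ji(t). *)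
Definition step (n : nat) (r w : nat -> R) (x : state)
    (uu bb : nat -> nat -> R) : state :=
  fun i => proj01 (w i * x_ave n x
     + (1 - w i) / card_N n r x i
       * (x i + rsum (nbrs_other n r x i) (fun j => x j + uu j i + bb j i))).

(* Controller strategies: delta h i and u h j i depend on the history
   h = [x(t); x(t-1); ...; x(0)] (most recent first).
   Disturbance b t j i = b_ji(t). *)
Definition history := list state.

Definition cur (h : history) : state := hd (fun _ => 0) h.

Fixpoint hist (n : nat) (r w : nat -> R)
    (u : history -> nat -> nat -> R) (b : nat -> nat -> nat -> R)
    (x0 : state) (t : nat) : history :=
  match t with
  | O => [x0]
  | S t' => let h := hist n r w u b x0 t' in
            step n r w (cur h) (u h) (b t') :: h
  end.

Definition traj n r w u b x0 (t : nat) : state := cur (hist n r w u b x0 t).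

Definition robustly_reachable (n : nat) (r w : nat -> R) (eta : R)
    (S : state -> Prop) : Prop :=
  exists (T : nat) (eps' : R),
    (0 < T)%nat /\ 0 < eps' < eta /\
    forall x0 : state, in_box n x0 ->
      S x0 \/
      exists (delta : history -> nat -> R) (u : history -> nat -> nat -> R),
        (forall h i, (i < n)%nat -> eps' <= delta h i < eta) /\
        (forall h i j, (i < n)%nat -> (j < n)%nat ->
            - eta + delta h i <= u h j i <= eta - delta h i) /\
        forall b : nat -> nat -> nat -> R,
          (forall t i j, (t < T)%nat -> (i < n)%nat -> (j < n)%nat -> j <> i ->
             nbb r (traj n r w u b x0 t) i j = true ->
             let d := delta (hist n r w u b x0 t) i in
             - d <= b t j i <= d) ->
          exists t, (1 <= t <= T)%nat /\ S (traj n r w u b x0 t).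

(* maximum of a list of reals (all values here are >= 0, resp. > 0,
   so the initial value 0 does not affect the maximum) *)
Definition rmax_list (l : list R) : R := fold_right Rmax 0 l.

Definition a_coef (n : nat) (w : nat -> R) (eta : R) (i j : nat) : R :=
  (INR n - 1) * (2 - w i - w j) * eta / INR n.

Definition max_a (n : nat) (w : nat -> R) (eta : R) : R :=
  rmax_list (flat_map (fun i => map (fun j => a_coef n w eta i j)
                         (filter (fun j => negb (Nat.eqb i j)) (idx n))) (idx n)).

Definition c_eps (n : nat) (w : nat -> R) (eta eps : R) : R :=
  Rmin (max_a n w eta - 2 * eps) 1.

Definition max_diff (n : nat) (x : state) : R :=
  rmax_list (flat_map (fun i => map (fun j => Rabs (x i - x j)) (idx n)) (idx n)).

Definition E_set (n : nat) (c : R) (x : state) : Prop :=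
  in_box n x /\ max_diff n x >= c.

(* Main.v *)
Require Import Defs.
From Stdlib Require Import Reals Lra Lia List.
Import ListNotations.
Open Scope R_scope.


Lemma rsum_plus l f g : rsum l (fun j => f j + g j) = rsum l f + rsum l g.
Proof. induction l; simpl; lra. Qed.

Lemma rsum_const l c : rsum l (fun _ => c) = INR (length l) * c.
Proof. induction l; [simpl; lra|].
  change (rsum (a::l) (fun _ => c)) with (c + rsum l (fun _ => c)).
  change (length (a::l)) with (S (length l)). rewrite IHl, S_INR. lra. Qed.

Lemma rsum_ext l f g : (forall j, In j l -> f j = g j) -> rsum l f = rsum l g.
Proof. induction l; simpl; intros H; auto. rewrite H, IHl; auto. Qed.

Lemma rsum_le l f lo hi : (forall j, In j l -> lo <= f j <= hi) ->
  INR (length l) * lo <= rsum l f <= INR (length l) * hi.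
Proof.
  induction l; intros H; [simpl; lra|].
  change (rsum (a::l) f) with (f a + rsum l f).
  change (length (a::l)) with (S (length l)). rewrite S_INR. destruct (H a (or_introl eq_refl)).
  destruct IHl as [G1 G2]; [intros; apply H; simpl; auto|]. rewrite !Rmult_plus_distr_r, !Rmult_1_l. lra.
Qed.

Lemma filter_all_id (p : nat -> bool) l : (forall j, In j l -> p j = true) -> filter p l = l.
Proof. induction l; simpl; intros H; auto. rewrite H by auto. f_equal; auto. Qed.

Lemma rsum_remove l f i : NoDup l -> In i l ->
  rsum l f = f i + rsum (filter (fun j => negb (Nat.eqb j i)) l) f.
Proof.
  induction l as [|a l IH]; simpl; intros Hn Hi; [contradiction|].
  inversion Hn; subst.
  destruct (Nat.eqb_spec a i).
  - subst. simpl. rewrite filter_all_id; [reflexivity|].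
    intros j Hj. destruct (Nat.eqb_spec j i); subst; auto.
  - destruct Hi as [Hi|Hi]; [congruence|]. simpl. rewrite (IH H2 Hi). lra.
Qed.

Lemma avg_bound a l f lo hi : lo <= a <= hi -> (forall j, In j l -> lo <= f j <= hi) ->
  lo <= (a + rsum l f) / INR (S (length l)) <= hi.
Proof.
  intros Ha Hf. pose proof (rsum_le l f lo hi Hf). rewrite S_INR.
  pose proof (pos_INR (length l)).
  split; [apply Rmult_le_reg_r with (INR (length l) + 1)|
          apply Rmult_le_reg_r with (INR (length l) + 1)]; try lra;
  unfold Rdiv; rewrite Rmult_assoc, Rinv_l by lra; nra.
Qed.

Lemma rmax_ge0 l : 0 <= rmax_list l.
Proof. induction l; simpl; [lra|]. eapply Rle_trans; [apply IHl| apply Rmax_r]. Qed.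

Lemma rmax_in l a : In a l -> a <= rmax_list l.
Proof.
  induction l; simpl; intros H; [contradiction|]. destruct H; subst.
  apply Rmax_l. eapply Rle_trans; [apply IHl; auto| apply Rmax_r].
Qed.

Lemma rmax_le l B : 0 <= B -> (forall a, In a l -> a <= B) -> rmax_list l <= B.
Proof.
  induction l; simpl; intros H0 H; auto. apply Rmax_lub; auto.
Qed.

Lemma rmax_att l : rmax_list l = 0 \/ In (rmax_list l) l.
Proof.
  induction l; simpl; [left; reflexivity|]. unfold Rmax. destruct Rle_dec.
  destruct IHl as [H|H]; [left|right]; simpl; auto. right; left; auto.
Qed.

Definition lmin (f : nat -> R) (n : nat) : R := fold_right Rmin 1 (map f (seq 0 n)).



Lemma lmin_in_le l a : In a l -> fold_right Rmin 1 l <= a.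
Proof.
  induction l; simpl; intros H; [contradiction|]. destruct H; subst.
  apply Rmin_l. eapply Rle_trans; [apply Rmin_r| auto].
Qed.

Lemma lmin_pos l : (forall a, In a l -> 0 < a) -> 0 < fold_right Rmin 1 l.
Proof.
  induction l; simpl; intros H; [lra|]. unfold Rmin; destruct Rle_dec; auto.
Qed.

Lemma lmin_att l : fold_right Rmin 1 l = 1 \/ In (fold_right Rmin 1 l) l.
Proof.
  induction l; simpl; [left; reflexivity|]. unfold Rmin. destruct Rle_dec.
  right; left; auto. destruct IHl as [H|H]; [left|right]; simpl; auto.
Qed.

Lemma lmin_le f n i : (i < n)%nat -> lmin f n <= f i.
Proof. intros. apply lmin_in_le. apply in_map. apply in_seq. lia. Qed.

Lemma lmin_pos' f n : (forall i, (i < n)%nat -> 0 < f i) -> 0 < lmin f n.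
Proof. intros H. apply lmin_pos. intros a Ha. apply in_map_iff in Ha.
  destruct Ha as [i [<- Hi]]. apply in_seq in Hi. apply H. lia. Qed.

Lemma max_diff_ge n x i j : (i < n)%nat -> (j < n)%nat -> Rabs (x i - x j) <= max_diff n x.
Proof.
  intros. apply rmax_in. apply in_flat_map. exists i. split; [apply in_seq; lia|].
  apply (in_map (fun j => Rabs (x i - x j))). apply in_seq; lia.
Qed.

Lemma max_diff_le n x B : 0 <= B -> (forall i j, (i < n)%nat -> (j < n)%nat -> Rabs (x i - x j) <= B) ->
  max_diff n x <= B.
Proof.
  intros H0 H. apply rmax_le; auto. intros a Ha. apply in_flat_map in Ha.
  destruct Ha as [i [Hi Ha]]. apply in_map_iff in Ha. destruct Ha as [j [<- Hj]].
  apply in_seq in Hi, Hj. apply H; lia.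
Qed.

Lemma spread_bounds n x : (0 < n)%nat -> in_box n x ->
  exists m, forall k, (k < n)%nat -> m <= x k <= m + max_diff n x.
Proof.
  intros Hn Hb. exists (lmin x n). intros k Hk. split; [apply lmin_le; auto|].
  pose proof (rmax_ge0 (flat_map (fun i => map (fun j => Rabs (x i - x j)) (idx n)) (idx n))) as H0.
  fold (max_diff n x) in H0.
  destruct (lmin_att (map x (seq 0 n))) as [H|H]; unfold lmin.
  - rewrite H. destruct (Hb k Hk). lra.
  - apply in_map_iff in H. destruct H as [k0 [Hk0 Hin]]. apply in_seq in Hin.
    rewrite <- Hk0. pose proof (max_diff_ge n x k k0 Hk (ltac:(lia))).
    pose proof (Rle_abs (x k - x k0)). lra.
Qed.


Lemma proj_range y : 0 <= proj01 y <= 1.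
Proof. unfold proj01, Rmin, Rmax; repeat destruct Rle_dec; lra. Qed.
Lemma proj_id y : 0 <= y <= 1 -> proj01 y = y.
Proof. unfold proj01, Rmin, Rmax; repeat destruct Rle_dec; lra. Qed.
Lemma proj_mono a b : a <= b -> proj01 a <= proj01 b.
Proof. unfold proj01, Rmin, Rmax; repeat destruct Rle_dec; lra. Qed.
Lemma proj_lip a b : Rabs (proj01 a - proj01 b) <= Rabs (a - b).
Proof. unfold proj01, Rmin, Rmax; repeat destruct Rle_dec; unfold Rabs; repeat destruct Rcase_abs; lra. Qed.

Lemma step_box n r w x uu bb : in_box n (step n r w x uu bb).
Proof. intros i _. apply proj_range. Qed.

Lemma idx_len n : INR (length (idx n)) = INR n.
Proof. unfold idx. rewrite length_seq. reflexivity. Qed.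

Lemma ave_bounds n x lo hi : (0 < n)%nat -> (forall k, (k < n)%nat -> lo <= x k <= hi) ->
  lo <= x_ave n x <= hi.
Proof.
  intros Hn H. unfold x_ave.
  assert (Hl : forall j, In j (idx n) -> lo <= x j <= hi).
  { intros j Hj. apply H. unfold idx in Hj. apply in_seq in Hj. lia. }
  pose proof (rsum_le _ _ _ _ Hl) as [A B]. rewrite idx_len in A, B.
  assert (0 < INR n) by (apply lt_0_INR; lia).
  split; [apply Rmult_le_reg_r with (INR n)|apply Rmult_le_reg_r with (INR n)]; auto;
  unfold Rdiv; rewrite Rmult_assoc, Rinv_l by lra; lra.
Qed.

Lemma pair_bound wi wk wm A Mi Mk m D d : 0 <= wm ->
  wm <= wi < 1 -> wm <= wk < 1 -> m <= A <= m + D -> Mi <= m + D + d -> m - d <= Mk -> 0 <= d ->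
  wi * A + (1 - wi) * Mi - (wk * A + (1 - wk) * Mk) <= (1 - wm) * D + 2 * d.
Proof.
  intros. destruct (Rle_dec wk wi).
  - assert ((wi - wk) * A <= (wi - wk) * (m + D)) by (apply Rmult_le_compat_l; lra).
    assert ((1-wi) * Mi <= (1-wi) * (m+D+d)) by (apply Rmult_le_compat_l; lra).
    assert ((1-wk) * (m - d) <= (1-wk) * Mk) by (apply Rmult_le_compat_l; lra).
    assert (0 <= D) by lra.
    assert ((1-wk) * D <= (1-wm) * D) by (apply Rmult_le_compat_r; lra).
    assert (0 <= (wi+wk)*d) by (apply Rmult_le_pos; lra). lra.
  - assert ((wi - wk) * A <= (wi - wk) * m) by (apply Rmult_le_compat_neg_l; lra).
    assert ((1-wi) * Mi <= (1-wi) * (m+D+d)) by (apply Rmult_le_compat_l; lra).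
    assert ((1-wk) * (m - d) <= (1-wk) * Mk) by (apply Rmult_le_compat_l; lra).
    assert (0 <= D) by lra.
    assert ((1-wi) * D <= (1-wm) * D) by (apply Rmult_le_compat_r; lra).
    assert (0 <= (wi+wk)*d) by (apply Rmult_le_pos; lra). lra.
Qed.

Lemma step_noncl n r w x uu bb d wm : 0 <= wm ->
  (0 < n)%nat -> in_box n x -> (forall i, (i < n)%nat -> wm <= w i < 1) -> 0 <= d ->
  (forall j i, uu j i = 0) ->
  (forall i j, (i < n)%nat -> (j < n)%nat -> j <> i -> nbb r x i j = true -> -d <= bb j i <= d) ->
  max_diff n (step n r w x uu bb) <= (1 - wm) * max_diff n x + 2 * d.
Proof.
  intros Hwm Hn Hb Hw Hd Hu Hbb.
  destruct (spread_bounds n x Hn Hb) as [m Hm].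
  set (D := max_diff n x) in *.
  assert (HD : 0 <= D) by apply rmax_ge0.
  assert (HA : m <= x_ave n x <= m + D) by (apply ave_bounds; auto).
  assert (HY : forall i, (i < n)%nat -> exists Mi, m - d <= Mi <= m + D + d /\
     step n r w x uu bb i = proj01 (w i * x_ave n x + (1 - w i) * Mi)).
  { intros i Hi.
    exists ((x i + rsum (nbrs_other n r x i) (fun j => x j + uu j i + bb j i)) / INR (S (length (nbrs_other n r x i)))).
    split.
    2:{ unfold step, card_N. f_equal. unfold Rdiv. ring. }
    apply avg_bound. { specialize (Hm i Hi). lra. }
    intros j Hj. unfold nbrs_other in Hj. apply filter_In in Hj as [Hj Hc].
    apply andb_prop in Hc as [Hc1 Hc2]. unfold idx in Hj. apply in_seq in Hj.
    rewrite Hu. specialize (Hm j ltac:(lia)).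
    assert (j <> i) by (intro; subst; rewrite Nat.eqb_refl in Hc1; discriminate).
    specialize (Hbb i j Hi ltac:(lia) H Hc2). lra. }
  apply max_diff_le. { destruct (Hw 0%nat Hn). apply Rplus_le_le_0_compat; [apply Rmult_le_pos|]; lra. }
  intros i k Hi Hk.
  destruct (HY i Hi) as [Mi [HMi ->]]. destruct (HY k Hk) as [Mk [HMk ->]].
  eapply Rle_trans; [apply proj_lip|]. apply Rabs_le. split.
  - pose proof (pair_bound (w k) (w i) wm (x_ave n x) Mk Mi m D d Hwm (Hw k Hk) (Hw i Hi) HA ltac:(lra) ltac:(lra) Hd). lra.
  - apply (pair_bound (w i) (w k) wm (x_ave n x) Mi Mk m D d Hwm (Hw i Hi) (Hw k Hk) HA ltac:(lra) ltac:(lra) Hd).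
Qed.


Definition gg (n : nat) (w : nat -> R) (i : nat) : R := (1 - w i) * (INR n - 1) / INR n.

Lemma step_cl n r w x s bb d rho :
  (0 < n)%nat -> (forall i, (i < n)%nat -> 0 < w i < 1) -> 0 <= d ->
  (forall i, (i < n)%nat -> rho <= r i) -> max_diff n x <= rho ->
  (forall i j, (i < n)%nat -> (j < n)%nat -> j <> i -> nbb r x i j = true -> -d <= bb j i <= d) ->
  forall i, (i < n)%nat ->
  exists y, step n r w x (fun _ i => s i) bb i = proj01 y /\
    x_ave n x + gg n w i * s i - gg n w i * d <= y <= x_ave n x + gg n w i * s i + gg n w i * d.
Proof.
  intros Hn Hw Hd Hr Hc Hbb i Hi.
  set (l := filter (fun j => negb (Nat.eqb j i)) (idx n)).
  assert (Hl : nbrs_other n r x i = l).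
  { unfold nbrs_other, l. apply filter_ext_in. intros a Ha.
    unfold idx in Ha. apply in_seq in Ha.
    assert (nbb r x i a = true).
    { unfold nbb. destruct Rle_dec; auto. exfalso. apply n0.
      pose proof (max_diff_ge n x a i ltac:(lia) Hi). specialize (Hr i Hi). lra. }
    rewrite H. destruct (negb _); reflexivity. }
  assert (Hnd : NoDup (idx n)) by apply seq_NoDup.
  assert (Hin : In i (idx n)) by (apply in_seq; lia).
  pose proof (rsum_remove _ x _ Hnd Hin) as E1. fold l in E1.
  pose proof (rsum_remove _ (fun _ => 1) _ Hnd Hin) as E2. fold l in E2.
  rewrite !rsum_const, idx_len in E2.
  assert (HN : 0 < INR n) by (apply lt_0_INR; lia).
  assert (Hlm : forall j, In j l -> (j < n)%nat /\ j <> i /\ nbb r x i j = true).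
  { intros j Hj. rewrite <- Hl in Hj. unfold nbrs_other in Hj. apply filter_In in Hj as [Hj Hc'].
    apply andb_prop in Hc' as [Hc1 Hc2]. unfold idx in Hj. apply in_seq in Hj.
    repeat split; auto; try lia. intro; subst; rewrite Nat.eqb_refl in Hc1; discriminate. }
  assert (HB : INR (length l) * (-d) <= rsum l (fun j => bb j i) <= INR (length l) * d).
  { apply rsum_le. intros j Hj. destruct (Hlm j Hj) as [? [? ?]]. apply Hbb; auto. }
  assert (Hs : rsum l (fun j => x j + s i + bb j i) = rsum l x + INR (length l) * s i + rsum l (fun j => bb j i)).
  { rewrite rsum_plus, rsum_plus, rsum_const. ring. }
  exists (w i * x_ave n x + (1 - w i) / card_N n r x i * (x i + rsum (nbrs_other n r x i) (fun j => x j + s i + bb j i))).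
  split; [reflexivity|].
  unfold card_N. rewrite Hl, Hs. rewrite S_INR.
  set (B := rsum l (fun j => bb j i)) in *.
  set (L := INR (length l)) in *.
  assert (EL : L = INR n - 1) by lra.
  assert (Ey : w i * x_ave n x + (1 - w i) / (L + 1) * (x i + (rsum l x + L * s i + B)) =
     x_ave n x + gg n w i * s i + (1 - w i) / INR n * B).
  { unfold x_ave, gg. rewrite E1. rewrite EL. field. lra. }
  rewrite Ey. destruct (Hw i Hi).
  assert (0 <= (1 - w i) / INR n) by (unfold Rdiv; apply Rmult_le_pos; [lra| left; apply Rinv_0_lt_compat; lra]).
  assert (Eg : gg n w i * d = (1 - w i) / INR n * (L * d)) by (unfold gg; rewrite EL; field; lra).
  assert ((1 - w i) / INR n * B <= (1 - w i) / INR n * (L * d)) by (apply Rmult_le_compat_l; lra).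
  assert ((1 - w i) / INR n * (L * (-d)) <= (1 - w i) / INR n * B) by (apply Rmult_le_compat_l; lra).
  assert ((1 - w i) / INR n * (L * (-d)) = - ((1 - w i) / INR n * (L * d))) by ring.
  lra.
Qed.

Lemma gg_bounds n w i : (2 <= n)%nat -> 0 < w i < 1 -> 0 < gg n w i <= 1.
Proof.
  intros Hn Hw. unfold gg. assert (2 <= INR n) by (apply (le_INR 2); lia).
  split. apply Rdiv_lt_0_compat; [apply Rmult_lt_0_compat|]; lra.
  apply Rmult_le_reg_r with (INR n); [lra|]. unfold Rdiv. rewrite Rmult_assoc, Rinv_l by lra. nra.
Qed.


Lemma argmax_a n w eta : (2 <= n)%nat -> (forall i, (i < n)%nat -> 0 < w i < 1) -> 0 < eta ->
  exists i j, (i < n)%nat /\ (j < n)%nat /\ i <> j /\ max_a n w eta <= a_coef n w eta i j.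
Proof.
  intros Hn Hw He.
  assert (Hpos : forall i j, (i < n)%nat -> (j < n)%nat -> 0 <= a_coef n w eta i j).
  { intros i j Hi Hj. unfold a_coef. assert (2 <= INR n) by (apply (le_INR 2); lia).
    destruct (Hw i Hi), (Hw j Hj). unfold Rdiv. apply Rmult_le_pos; [|left; apply Rinv_0_lt_compat; lra].
    apply Rmult_le_pos; [apply Rmult_le_pos|]; lra. }
  destruct (rmax_att (flat_map (fun i => map (fun j => a_coef n w eta i j)
                         (filter (fun j => negb (Nat.eqb i j)) (idx n))) (idx n))) as [H|H];
  fold (max_a n w eta) in H.
  - exists 0%nat, 1%nat. repeat split; try lia. rewrite H. apply Hpos; lia.
  - apply in_flat_map in H. destruct H as [i [Hi H]]. apply in_map_iff in H.
    destruct H as [j [Hj H]]. apply filter_In in H as [H Hne].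
    unfold idx in Hi, H. apply in_seq in Hi, H. exists i, j. repeat split; try lia.
    + intro; subst. rewrite Nat.eqb_refl in Hne. discriminate.
    + rewrite Hj. lra.
Qed.

Lemma a_gg n w eta i j : (0 < n)%nat -> a_coef n w eta i j = (gg n w i + gg n w j) * eta.
Proof. intros. unfold a_coef, gg. assert (0 < INR n) by (apply lt_0_INR; lia). field. lra. Qed.

Definition sv n (r w : nat -> R) (rho L U h : R) (is js : nat) (eta d : R) (x : state) (i : nat) : R :=
  if Rle_dec (max_diff n x) rho then
    (if Rlt_dec (x_ave n x) L then h / gg n w i
     else if Rlt_dec U (x_ave n x) then - (h / gg n w i)
     else if Nat.eqb i is then eta - d else if Nat.eqb i js then - (eta - d) else 0)
  else 0.

Lemma push_ok A P Q c L U : 0 <= A <= 1 -> L = c - P -> U = 1 + Q - c -> L <= A <= U ->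
  0 <= P -> 0 <= Q -> c <= P + Q -> c <= 1 -> c <= proj01 (A + P) - proj01 (A - Q).
Proof. intros. unfold proj01, Rmin, Rmax; repeat destruct Rle_dec; lra. Qed.


Theorem lemma8 (n : nat) (r w : nat -> R) (eta eps : R) :
  (3 <= n)%nat ->
  (forall i, (i < n)%nat -> 0 < r i <= 1) ->
  (forall i, (i < n)%nat -> 0 < w i < 1) ->
  0 < eta ->
  0 < eps < eta ->
  robustly_reachable n r w eta (E_set n (c_eps n w eta eps)).
Proof.
  intros Hn Hr Hw He Heps.
  assert (Hn0 : (0 < n)%nat) by lia.
  set (rho := lmin r n).
  assert (Hrho : 0 < rho) by (apply lmin_pos'; intros; apply Hr; auto).
  assert (Hrho_le : forall i, (i < n)%nat -> rho <= r i) by (intros; apply lmin_le; auto).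
  set (wm := lmin w n).
  assert (Hwm : 0 < wm) by (apply lmin_pos'; intros; apply Hw; auto).
  assert (Hwm_le : forall i, (i < n)%nat -> wm <= w i) by (intros; apply lmin_le; auto).
  assert (Hwm1 : wm < 1) by (pose proof (Hwm_le 0%nat Hn0); pose proof (Hw 0%nat Hn0); lra).
  set (gm := lmin (gg n w) n).
  assert (Hgg : forall i, (i < n)%nat -> 0 < gg n w i <= 1) by (intros; apply gg_bounds; auto; lia).
  assert (Hgm : 0 < gm) by (apply lmin_pos'; intros; apply Hgg; auto).
  assert (Hgm_le : forall i, (i < n)%nat -> gm <= gg n w i) by (intros; apply lmin_le; auto).
  set (d := Rmin (eps/4) (Rmin (gm*eta/6) (wm*rho/4))).
  assert (Hd0 : 0 < d).
  { unfold d. repeat apply Rmin_glb_lt; try lra; apply Rmult_lt_0_compat; try lra;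
    apply Rmult_lt_0_compat; lra. }
  assert (Hd1 : d <= eps/4) by apply Rmin_l.
  assert (Hd2 : d <= gm*eta/6) by (eapply Rle_trans; [apply Rmin_r|apply Rmin_l]).
  assert (Hd3 : d <= wm*rho/4) by (eapply Rle_trans; [apply Rmin_r|apply Rmin_r]).
  assert (Hgm1 : gm <= 1) by (pose proof (Hgm_le 0%nat Hn0); pose proof (Hgg 0%nat Hn0); lra).
  assert (Hd4 : d <= eta / 6).
  { eapply Rle_trans; [apply Hd2|]. assert (gm * eta <= 1 * eta) by (apply Rmult_le_compat_r; lra). lra. }
  assert (Hd5 : d <= rho / 4).
  { eapply Rle_trans; [apply Hd3|]. assert (wm * rho <= 1 * rho) by (apply Rmult_le_compat_r; lra). lra. }
  destruct (argmax_a n w eta ltac:(lia) Hw He) as [is [js [His [Hjs [Hij Hmax]]]]].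
  rewrite a_gg in Hmax by auto.
  set (c := c_eps n w eta eps).
  assert (Hc1 : c <= 1) by apply Rmin_r.
  assert (Hc2 : c <= max_a n w eta - 2 * eps) by apply Rmin_l.
  set (P := gg n w is * (eta - 2 * d)).
  set (Q := gg n w js * (eta - 2 * d)).
  set (L := c - P). set (U := 1 + Q - c). set (h := 2 * d).
  pose proof (Hgg is His) as Ggi. pose proof (Hgg js Hjs) as Ggj.
  pose proof (Hgm_le is His) as Gmi. pose proof (Hgm_le js Hjs) as Gmj.
  assert (HP : 3 * d <= P).
  { unfold P. assert (gm * (eta - 2*d) <= gg n w is * (eta - 2*d)) by (apply Rmult_le_compat_r; lra).
    assert (gm * (eta/2 - 2 * d) >= 0) by (apply Rle_ge, Rmult_le_pos; lra). lra. }
  assert (HQ : 3 * d <= Q).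
  { unfold Q. assert (gm * (eta - 2*d) <= gg n w js * (eta - 2*d)) by (apply Rmult_le_compat_r; lra).
    assert (gm * (eta/2 - 2 * d) >= 0) by (apply Rle_ge, Rmult_le_pos; lra). lra. }
  assert (HPQ : P + Q >= max_a n w eta - 4 * d).
  { unfold P, Q. assert (d * (gg n w is + gg n w js) <= d * 2) by (apply Rmult_le_compat_l; lra). lra. }
  assert (HUL : L + 3 * d <= U) by (unfold L, U; lra).
  assert (Hcpq : c <= P + Q) by lra.
  destruct (pow_lt_1_zero (1 - wm) ltac:(rewrite Rabs_right; lra) (rho/2) ltac:(lra)) as [K HK].
  specialize (HK K (le_n K)). rewrite Rabs_right in HK by (apply Rle_ge, pow_le; lra).
  destruct (INR_archimed d 1 ltac:(lra)) as [M HM].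
  set (sx := sv n r w rho L U h is js eta d).
  exists (K + M + 1)%nat, d. split; [lia|]. split; [lra|].
  intros x0 Hx0. right.
  exists (fun _ _ => d), (fun hh j i => sx (cur hh) i).
  split; [intros; lra|].
  split.
  { intros hh i j Hi _. unfold sx, sv.
    assert (Hh : h / gg n w i <= eta - d).
    { destruct (Hgg i Hi). apply Rmult_le_reg_r with (gg n w i); [lra|].
      unfold Rdiv. rewrite Rmult_assoc, Rinv_l by lra.
      assert (gm * (eta - d) <= gg n w i * (eta - d)) by (apply Rmult_le_compat_r; [lra|apply Hgm_le; auto]).
      assert (gm * d <= gm * (eta/6)) by (apply Rmult_le_compat_l; lra).
      unfold h. lra. }
    assert (0 <= h / gg n w i) by (destruct (Hgg i Hi); unfold Rdiv, h; apply Rmult_le_pos; [lra|left; apply Rinv_0_lt_compat; lra]).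
    destruct Rle_dec; [destruct Rlt_dec; [|destruct Rlt_dec; [|destruct (Nat.eqb i is); [|destruct (Nat.eqb i js)]]]|]; lra. }
  intros b Hb.
  set (X := traj n r w (fun hh j i => sx (cur hh) i) b x0).
  assert (XS : forall t, X (S t) = step n r w (X t) (fun _ i => sx (X t) i) (b t)) by reflexivity.
  assert (Xbox : forall t, in_box n (X t)).
  { intros [|t]; [exact Hx0| rewrite XS; apply step_box]. }
  assert (Xnoise : forall t, (t < K + M + 1)%nat -> forall i j, (i < n)%nat -> (j < n)%nat -> j <> i ->
       nbb r (X t) i j = true -> - d <= b t j i <= d).
  { intros t Ht i j Hi Hj Hji Hnb. exact (Hb t i j Ht Hi Hj Hji Hnb). }

  set (T := (K + M + 1)%nat) in *.
  assert (Abox : forall t, 0 <= x_ave n (X t) <= 1).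
  { intros t. apply ave_bounds; auto. apply Xbox. }
  assert (Fnc : forall t, (t < T)%nat -> ~ max_diff n (X t) <= rho ->
     max_diff n (X (S t)) <= (1 - wm) * max_diff n (X t) + 2 * d).
  { intros t Ht Hnc. rewrite XS. apply step_noncl; [lra|exact Hn0|apply Xbox| |lra| |].
    - intros i Hi. split; [apply Hwm_le; auto| apply Hw; auto].
    - intros j i. unfold sx, sv. destruct Rle_dec; [contradiction|reflexivity].
    - apply Xnoise; auto. }
  assert (Fmove : forall t sg, (t < T)%nat -> max_diff n (X t) <= rho ->
     (forall i, (i < n)%nat -> gg n w i * sx (X t) i = sg) ->
     0 <= x_ave n (X t) + sg - d -> x_ave n (X t) + sg + d <= 1 ->
     forall i, (i < n)%nat -> x_ave n (X t) + sg - d <= X (S t) i <= x_ave n (X t) + sg + d).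
  { intros t sg Ht Hcl Hs H0 H1 i Hi. rewrite XS.
    destruct (step_cl n r w (X t) (sx (X t)) (b t) d rho Hn0 Hw ltac:(lra) Hrho_le Hcl
       (Xnoise t Ht) i Hi) as [y [-> Hy]].
    rewrite Hs in Hy by auto. destruct (Hgg i Hi).
    assert (gg n w i * d <= d) by (pose proof (Rmult_le_compat_r d _ _ ltac:(lra) H2); lra).
    rewrite proj_id; lra. }
  assert (Fmove2 : forall t sg, (t < T)%nat -> max_diff n (X t) <= rho ->
     (forall i, (i < n)%nat -> gg n w i * sx (X t) i = sg) ->
     0 <= x_ave n (X t) + sg - d -> x_ave n (X t) + sg + d <= 1 ->
     max_diff n (X (S t)) <= rho /\
     x_ave n (X t) + sg - d <= x_ave n (X (S t)) <= x_ave n (X t) + sg + d).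
  { intros t sg Ht Hcl Hs H0 H1. pose proof (Fmove t sg Ht Hcl Hs H0 H1) as F. split.
    - apply Rle_trans with (2 * d); [|lra]. apply max_diff_le; [lra|].
      intros i j Hi Hj. pose proof (F i Hi). pose proof (F j Hj). apply Rabs_le. lra.
    - apply ave_bounds; auto. }
  assert (Fup : forall t, (t < T)%nat -> max_diff n (X t) <= rho -> x_ave n (X t) < L ->
     max_diff n (X (S t)) <= rho /\
     x_ave n (X t) + d <= x_ave n (X (S t)) <= x_ave n (X t) + 3 * d).
  { intros t Ht Hcl HA.
    assert (Hs : forall i, (i < n)%nat -> gg n w i * sx (X t) i = h).
    { intros i Hi. unfold sx, sv. destruct Rle_dec; [|contradiction]. destruct Rlt_dec; [|lra].
      destruct (Hgg i Hi). field. lra. }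
    pose proof (Abox t).
    destruct (Fmove2 t h Ht Hcl Hs ltac:(unfold h; lra) ltac:(unfold h, L in *; lra)). unfold h in *. split; [auto|lra]. }
  assert (Fdown : forall t, (t < T)%nat -> max_diff n (X t) <= rho -> ~ x_ave n (X t) < L -> U < x_ave n (X t) ->
     max_diff n (X (S t)) <= rho /\
     x_ave n (X t) - 3 * d <= x_ave n (X (S t)) <= x_ave n (X t) - d).
  { intros t Ht Hcl HA HA'.
    assert (Hs : forall i, (i < n)%nat -> gg n w i * sx (X t) i = - h).
    { intros i Hi. unfold sx, sv. destruct Rle_dec; [|contradiction]. destruct Rlt_dec; [lra|].
      destruct Rlt_dec; [|lra]. destruct (Hgg i Hi). field. lra. }
    pose proof (Abox t).
    destruct (Fmove2 t (-h) Ht Hcl Hs ltac:(unfold h, U in *; lra) ltac:(unfold h; lra)). unfold h in *. split; [auto|lra]. }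
  assert (Fpush : forall t, (t < T)%nat -> max_diff n (X t) <= rho -> L <= x_ave n (X t) <= U ->
     E_set n c (X (S t))).
  { intros t Ht Hcl HA. split; [apply Xbox|]. apply Rle_ge.
    set (A := x_ave n (X t)) in *.
    assert (E1 : sx (X t) is = eta - d).
    { unfold sx, sv. fold A. destruct Rle_dec; [|contradiction]. destruct Rlt_dec; [lra|].
      destruct Rlt_dec; [lra|]. rewrite Nat.eqb_refl. reflexivity. }
    assert (E2 : sx (X t) js = - (eta - d)).
    { unfold sx, sv. fold A. destruct Rle_dec; [|contradiction]. destruct Rlt_dec; [lra|].
      destruct Rlt_dec; [lra|]. destruct (Nat.eqb_spec js is); [congruence|]. rewrite Nat.eqb_refl. reflexivity. }
    rewrite !XS.
    destruct (step_cl n r w (X t) (sx (X t)) (b t) d rho Hn0 Hw ltac:(lra) Hrho_le Hcl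
       (Xnoise t Ht) is His) as [y1 [Ey1 Hy1]].
    destruct (step_cl n r w (X t) (sx (X t)) (b t) d rho Hn0 Hw ltac:(lra) Hrho_le Hcl
       (Xnoise t Ht) js Hjs) as [y2 [Ey2 Hy2]].
    fold A in Hy1, Hy2. rewrite E1 in Hy1. rewrite E2 in Hy2.
    eapply Rle_trans; [|apply (max_diff_ge n _ is js His Hjs)].
    rewrite Ey1, Ey2. eapply Rle_trans; [|apply Rle_abs].
    assert (proj01 (A + P) <= proj01 y1) by (apply proj_mono; unfold P; lra).
    assert (proj01 y2 <= proj01 (A - Q)) by (apply proj_mono; unfold Q; lra).
    pose proof (push_ok A P Q c L U (Abox t) eq_refl eq_refl HA ltac:(lra) ltac:(lra) Hcpq Hc1). lra. }
  assert (Hmd1 : max_diff n (X 0%nat) <= 1).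
  { apply max_diff_le; [lra|]. intros i j Hi Hj. destruct (Xbox 0%nat i Hi), (Xbox 0%nat j Hj).
    apply Rabs_le; lra. }
  assert (C1 : forall t, (t <= K)%nat -> (exists t', (t' <= t)%nat /\ max_diff n (X t') <= rho) \/
      max_diff n (X t) <= (1 - wm) ^ t + 2 * d / wm).
  { induction t as [|t IH]; intros Ht.
    - right. simpl. assert (0 <= 2 * d / wm) by (unfold Rdiv; apply Rmult_le_pos; [lra|left; apply Rinv_0_lt_compat; lra]). lra.
    - destruct (IH ltac:(lia)) as [[t' [Ht' Hc]]|Hb'].
      + left. exists t'. split; [lia|auto].
      + destruct (Rle_dec (max_diff n (X t)) rho) as [Hc|Hc].
        * left. exists t. split; [lia|auto].
        * right. pose proof (Fnc t ltac:(unfold T; lia) Hc).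
          assert ((1 - wm) * max_diff n (X t) <= (1 - wm) * ((1 - wm) ^ t + 2 * d / wm)) by (apply Rmult_le_compat_l; lra).
          assert (E : (1 - wm) * ((1 - wm) ^ t + 2 * d / wm) + 2 * d = (1 - wm) ^ S t + 2 * d / wm) by (simpl; field; lra).
          lra. }
  assert (Ht0 : exists t0, (t0 <= K)%nat /\ max_diff n (X t0) <= rho).
  { destruct (C1 K (le_n K)) as [[t' [Ht' Hc]]|Hb'].
    - exists t'. auto.
    - exists K. split; auto.
      assert (2 * d / wm <= rho / 2).
      { apply Rmult_le_reg_r with wm; auto. unfold Rdiv. rewrite Rmult_assoc, Rinv_l by lra. lra. }
      lra. }
  destruct Ht0 as [t0 [Ht0K Ht0c]].
  set (dist := fun A => Rmax (L - A) (A - U)).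
  assert (C2 : forall k, (k <= M)%nat ->
     (exists k', (k' <= k)%nat /\ max_diff n (X (t0 + k')%nat) <= rho /\ L <= x_ave n (X (t0 + k')%nat) <= U) \/
     (max_diff n (X (t0 + k)%nat) <= rho /\ dist (x_ave n (X (t0 + k)%nat)) <= 1 - INR k * d)).
  { induction k as [|k IH]; intros Hk.
    - right. rewrite Nat.add_0_r. split; auto. simpl. pose proof (Abox t0). unfold dist, Rmax.
      destruct Rle_dec; unfold L, U; lra.
    - destruct (IH ltac:(lia)) as [[k' [Hk' Hr']]|[Hc Hdist]].
      + left. exists k'. split; [lia|auto].
      + set (A := x_ave n (X (t0 + k)%nat)) in *.
        assert (Htk : (t0 + k < T)%nat) by (unfold T; lia).
        rewrite Nat.add_succ_r. rewrite S_INR.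
        destruct (Rlt_dec A L) as [HAL|HAL].
        * destruct (Fup _ Htk Hc HAL) as [Hc' HA'].
          destruct (Rle_dec L (x_ave n (X (S (t0 + k))))) as [HL|HL].
          -- left. exists (S k). rewrite Nat.add_succ_r. split; [lia|]. split; auto. fold A in HA'. split; auto.
             unfold L, U in *. lra.
          -- right. split; auto. fold A in HA'. unfold dist, Rmax in *.
             destruct Rle_dec; destruct Rle_dec; lra.
        * destruct (Rlt_dec U A) as [HAU|HAU].
          -- destruct (Fdown _ Htk Hc HAL HAU) as [Hc' HA'].
             destruct (Rle_dec (x_ave n (X (S (t0 + k)))) U) as [HU|HU].
             ++ left. exists (S k). rewrite Nat.add_succ_r. split; [lia|]. split; auto. fold A in HA'. split; auto.
                unfold L, U in *. lra.
             ++ right. split; auto. fold A in HA'. unfold dist, Rmax in *.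
                destruct Rle_dec; destruct Rle_dec; lra.
          -- left. exists k. split; [lia|]. split; auto. unfold A in *. split; lra. }
  assert (Hk1 : exists k', (k' <= M)%nat /\ max_diff n (X (t0 + k')%nat) <= rho /\ L <= x_ave n (X (t0 + k')%nat) <= U).
  { destruct (C2 M (le_n M)) as [[k' [Hk' Hr']]|[Hc Hdist]].
    - exists k'. split; [lia|auto].
    - exists M. split; auto. split; auto. unfold dist, Rmax in Hdist. destruct Rle_dec; lra. }
  destruct Hk1 as [k' [Hk' [Hc HA]]].
  exists (S (t0 + k')). split; [unfold T; lia|].
  apply Fpush; auto. unfold T; lia.
Qed.
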